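(* Let $n$ and $m$ be non-negative integers with $m\leq\binom{n}{2}$. Let $d$ and $\ell$ be the unique integers with $m=\binom{d}{2}+\ell$, $d\geq 1$ and $0\leq \ell\leq d-1$. Then the maximum of $c(G)$ over all graphs $G$ with $n$ vertices and $m$ edges equals $2^d+2^\ell+n-d-1$.
   Context: All graphs are finite, simple and undirected. A clique of a graph $G$ is a (possibly empty) set of pairwise adjacent vertices; in particular $\emptyset$ is a clique, every single vertex is a clique, and every edge is a clique. $c(G)$ denotes the number of cliques of $G$. *)

(* Defs.v *)
From mathcomp Require Import all_boot.
Set Implicit Arguments. Unset Strict Implicit. Unset Printing Implicit Defensive.

Definition simple_graph (n : nat) (e : rel 'I_n) : Prop :=
  irreflexive e /\ symmetric e.

Definition is_clique (n : nat) (e : rel 'I_n) (A : {set 'I_n}) : bool :=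
  [forall x in A, forall y in A, (x != y) ==> e x y].

(* c(G): the number of cliques of G (including the empty clique). *)
Definition num_cliques (n : nat) (e : rel 'I_n) : nat :=
  #|[set A : {set 'I_n} | is_clique e A]|.

Definition num_edges (n : nat) (e : rel 'I_n) : nat :=
  #|[set E : {set 'I_n} | (#|E| == 2) && is_clique e E]|.

(* Main.v *)
Require Import Defs.
From mathcomp Require Import all_boot.
From mathcomp Require Import zify.
From Stdlib Require Import FunctionalExtensionality.
Set Implicit Arguments. Unset Strict Implicit. Unset Printing Implicit Defensive.

Definition iso n (e : rel 'I_n) (v : 'I_n) : rel 'I_n :=
  fun x y => [&& e x y, x != v & y != v].
Definition nbr n (e : rel 'I_n) (v : 'I_n) := [set u | e v u].

Lemma cliqueP n (e : rel 'I_n) (A : {set 'I_n}) :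
  reflect (forall x y, x \in A -> y \in A -> x != y -> e x y) (is_clique e A).
Proof.
apply: (iffP forallP) => [H x y xA yA nxy | H x].
- by move: (H x); rewrite xA /= => /forallP/(_ y); rewrite yA nxy.
- apply/implyP => xA; apply/forallP => y; apply/implyP => yA; apply/implyP; exact: H.
Qed.

Lemma clique_iso n (e : rel 'I_n) v (A : {set 'I_n}) : v \notin A ->
  is_clique (iso e v) A = is_clique e A.
Proof.
move=> vA; apply/cliqueP/cliqueP => H x y xA yA nxy.
  by have /and3P[] := H x y xA yA nxy.
have xv : x != v by apply: contraNneq vA => <-.
have yv : y != v by apply: contraNneq vA => <-.
by apply/and3P; split => //; apply: H.
Qed.

Lemma clique_U1 n (e : rel 'I_n) v (B : {set 'I_n}) : simple_graph e -> v \notin B ->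
  is_clique e (v |: B) = (B \subset nbr e v) && is_clique e B.
Proof.
move=> [irr sym] vB; apply/cliqueP/andP => [H | [sB cB] x y].
  split.
    apply/subsetP => u uB; rewrite inE; apply: H; rewrite ?setU11 ?setU1r //.
    by apply: contraNneq vB => ->.
  by apply/cliqueP => x y xB yB; apply: H; rewrite setU1r.
rewrite !in_setU1 => /orP[/eqP->|xB] /orP[/eqP->|yB]; rewrite ?eqxx //.
- by move=> _; have := subsetP sB y yB; rewrite inE.
- by move=> _; have := subsetP sB x xB; rewrite inE sym.
- by move/cliqueP: cB; apply.
Qed.

Lemma notin_nbr n (e : rel 'I_n) v (B : {set 'I_n}) : simple_graph e ->
  B \subset nbr e v -> v \notin B.
Proof.
move=> [irr _] sB; apply/negP => /(subsetP sB); by rewrite inE irr.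
Qed.

Lemma cliques_iso n (e : rel 'I_n) v : simple_graph e ->
  num_cliques e + 1 =
  num_cliques (iso e v) + #|[set B : {set 'I_n} | (B \subset nbr e v) && is_clique e B]|.
Proof.
move=> sg.
set P := [set A : {set 'I_n} | v \in A].
set S := [set B : {set 'I_n} | _].
rewrite /num_cliques -(cardsID P [set A | is_clique e A])
  -(cardsID P [set A | is_clique (iso e v) A]).
have E1 : [set A | is_clique e A] :\: P = [set A | is_clique (iso e v) A] :\: P.
  apply/setP => A; rewrite !inE; case vA: (v \in A) => //=.
  by rewrite clique_iso ?vA.
have E2 : [set A | is_clique (iso e v) A] :&: P = [set [set v]].
  apply/setP => A; rewrite !inE; apply/andP/eqP => [[cA vA] | ->].
    apply/setP => x; rewrite inE; apply/idP/eqP => [xA|->//].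
    apply/eqP; apply: contraT => xv.
    have := cliqueP _ _ cA v x vA xA; rewrite eq_sym xv => /(_ isT).
    by rewrite /iso eqxx andbF.
  split; last by rewrite inE.
  by apply/cliqueP => x y; rewrite !inE => /eqP-> /eqP->; rewrite eqxx.
have E3 : [set A | is_clique e A] :&: P = (fun B => v |: B) @: S.
  apply/setP => A; rewrite !inE; apply/andP/imsetP => [[cA vA]|[B]].
    exists (A :\ v); last by rewrite setD1K.
    by rewrite inE -clique_U1 ?setD11 // setD1K.
  rewrite inE => /andP[sB cB] ->; split; last by rewrite setU11.
  by rewrite clique_U1 ?sB ?cB // (notin_nbr sg sB).
rewrite E1 E2 E3 cards1 card_in_imset; last first.
move=> B1 B2; rewrite !inE => /andP[s1 _] /andP[s2 _] h.
  by rewrite -(setU1K (notin_nbr sg s1)) -(setU1K (notin_nbr sg s2)) h.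
by rewrite addnC addnA (addnC 1) -addnA addnC.
Qed.

Definition Ed n (e : rel 'I_n) := [set E : {set 'I_n} | (#|E| == 2) && is_clique e E].

Lemma edges_at n (e : rel 'I_n) (v : 'I_n) : simple_graph e ->
  Ed e :&: [set A : {set 'I_n} | v \in A] = (fun u => [set v; u]) @: nbr e v.
Proof.
move=> [irr sym]; apply/setP => E; rewrite !inE; apply/andP/imsetP.
  move=> [/andP[/cards2P[x [y [xy ->]]] cE] vE].
  move: vE; rewrite !inE => /orP[]/eqP vx; subst.
    exists y => //; rewrite inE; move/cliqueP: cE; apply => //; by rewrite !inE ?eqxx ?orbT.
  exists x; last by rewrite setUC.
  rewrite inE; move/cliqueP: cE; apply; by rewrite ?inE ?eqxx ?orbT // eq_sym.
move=> [u]; rewrite inE => vu ->; split; last by rewrite !inE eqxx.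
have nvu : v != u by apply: contraTneq vu => ->; rewrite irr.
rewrite cards2 nvu /=; apply/cliqueP => x y; rewrite !inE.
by move=> /orP[]/eqP-> /orP[]/eqP->; rewrite ?eqxx // sym.
Qed.

Lemma card_edges_at n (e : rel 'I_n) (v : 'I_n) : simple_graph e ->
  #|Ed e :&: [set A : {set 'I_n} | v \in A]| = #|nbr e v|.
Proof.
move=> sg; rewrite edges_at // card_imset // => u1 u2 h.
have : u1 \in [set v; u2] by rewrite -h !inE eqxx orbT.
rewrite !inE => /orP[/eqP u1v|/eqP //].
have : u2 \in [set v; u1] by rewrite h !inE eqxx orbT.
rewrite !inE => /orP[/eqP u2v|/eqP //].
by rewrite u1v u2v.
Qed.

Lemma edges_iso n (e : rel 'I_n) v : simple_graph e ->
  num_edges e = num_edges (iso e v) + #|nbr e v|.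
Proof.
move=> sg.
set P := [set A : {set 'I_n} | v \in A].
rewrite /num_edges -(cardsID P [set E | _ && is_clique e E])
  -(cardsID P [set E | _ && is_clique (iso e v) E]).
rewrite -[[set E | _ && is_clique e E]]/(Ed e) card_edges_at //.
have E1 : Ed e :\: P = [set E : {set 'I_n} | (#|E| == 2) && is_clique (iso e v) E] :\: P.
  apply/setP => A; rewrite !inE; case vA: (v \in A) => //=.
  by rewrite clique_iso ?vA.
have E2 : [set E : {set 'I_n} | (#|E| == 2) && is_clique (iso e v) E] :&: P = set0.
  apply/setP => A; rewrite !inE; apply/negP => /andP[/andP[/cards2P[x [y [xy ->]]] cA]].
  have H : forall a b, a \in [set x; y] -> b \in [set x; y] -> a != b -> iso e v a b.
    by move/cliqueP: cA.
  rewrite !inE => /orP[]/eqP vx.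
    by have := H x y; rewrite xy !inE !eqxx orbT /iso -vx eqxx andbF => /(_ isT isT isT).
  by have := H y x; rewrite eq_sym xy !inE !eqxx orbT /iso -vx eqxx andbF => /(_ isT isT isT).
by rewrite E1 E2 cards0 addnC.
Qed.

Lemma card_filter_sum (T : finType) (A : {set T}) (f : T -> bool) :
  #|A :&: [set E | f E]| = \sum_(E in A) f E.
Proof.
rewrite -sum1_card big_mkcond [RHS]big_mkcond; apply: eq_bigr => E _.
by rewrite !inE; case: (E \in A); case: (f E).
Qed.

Lemma handshake n (e : rel 'I_n) : simple_graph e ->
  \sum_(x : 'I_n) #|nbr e x| = 2 * num_edges e.
Proof.
move=> sg.
rewrite (eq_bigr (fun x => \sum_(E in Ed e) (x \in E))); last first.
  by move=> x _; rewrite -card_edges_at // card_filter_sum.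
rewrite exchange_big /= (eq_bigr (fun _ => 2)); last first.
  move=> E; rewrite inE => /andP[/eqP <- _].
  by rewrite -sum1_card [RHS]big_mkcond.
by rewrite sum_nat_const mulnC.
Qed.

Lemma card_small n : #|[set A : {set 'I_n} | #|A| <= 1]| = n.+1.
Proof.
rewrite -(cardsID [set A : {set 'I_n} | #|A| == 0]).
have -> : [set A : {set 'I_n} | #|A| <= 1] :&: [set A : {set 'I_n} | #|A| == 0] = [set A : {set 'I_n} | #|A| == 0].
  by apply/setP => A; rewrite !inE; case: (#|A|) => [|[|k]].
have -> : [set A : {set 'I_n} | #|A| <= 1] :\: [set A : {set 'I_n} | #|A| == 0] = [set A : {set 'I_n} | #|A| == 1].
  by apply/setP => A; rewrite !inE; case: (#|A|) => [|[|k]].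
by rewrite !card_draws card_ord bin0 bin1.
Qed.

Lemma edge_of_clique n (e : rel 'I_n) (A : {set 'I_n}) :
  is_clique e A -> 1 < #|A| -> 0 < num_edges e.
Proof.
move=> cA /card_gt1P[x [y [xA yA xy]]].
rewrite /num_edges card_gt0; apply/set0Pn; exists [set x; y].
rewrite inE cards2 xy /=; apply/cliqueP => a b; rewrite !inE.
move=> /orP[]/eqP-> /orP[]/eqP-> ab; move/cliqueP: cA; apply => //.
Qed.

Lemma cliques_noedge n (e : rel 'I_n) : num_edges e = 0 -> num_cliques e <= n.+1.
Proof.
move=> h; rewrite -card_small /num_cliques; apply: subset_leq_card.
apply/subsetP => A; rewrite !inE => cA; rewrite leqNgt; apply/negP => /(edge_of_clique cA).
by rewrite h.
Qed.

Lemma arith n d l k : 1 <= d -> l <= d-1 -> 1 <= k -> k <= d-1 ->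
  exists d' l', 'C(d,2)+l-k = 'C(d',2)+l' /\ 1 <= d' /\ l' <= d'-1 /\
   (2^d' + 2^l' + n - d' - 1) + 2^k <= (2^d + 2^l + n - d - 1) + 1.
Proof.
move=> d1 ld k1 kd.
have hd := ltn_expl d (isT : 1 < 2).
case: (leqP k l) => kl.
  exists d, (l - k); split; first by lia.
  split => //; split; first by lia.
  have [a ->] : exists a, l = a + k by exists (l - k); rewrite subnK.
  rewrite addnK expnD.
  have ha : 0 < 2^a by rewrite expn_gt0.
  have hk : 0 < 2^k by rewrite expn_gt0.
  nia.
case: d d1 ld kd hd => [//|d1] _ ld kd hd.
have [b db] : exists b, d1 = b + k by exists (d1 - k); rewrite subnK //; lia.
exists d1, (d1 - k + l); split.
  rewrite binS bin1; lia.
split; first by lia.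
split; first by lia.
have -> : d1 - k + l = b + l by lia.
rewrite db expnS !expnD.
have hb : 0 < 2^b by rewrite expn_gt0.
have hl : 0 < 2^l by rewrite expn_gt0.
have hkl : 2^l < 2^k by rewrite ltn_exp2l.
move: hd; rewrite db expnS expnD => hd.
have key : 2^b * 2^l + 2^k <= 2^b * 2^k + 2^l.
  have : (2^b - 1) * 2^l <= (2^b - 1) * 2^k by rewrite leq_mul2l ltnW ?orbT.
  have : 2^l <= 2^b * 2^l by rewrite leq_pmull.
  have : 2^k <= 2^b * 2^k by rewrite leq_pmull.
  rewrite !mulnBl !mul1n. lia.
have hd1 := ltn_expl (b + k) (isT : 1 < 2); rewrite expnD in hd1.
lia.
Qed.

Lemma simple_iso n (e : rel 'I_n) v : simple_graph e -> simple_graph (iso e v).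
Proof.
move=> [irr sym]; split.
  by move=> x; rewrite /iso irr.
by move=> x y; rewrite /iso sym (andbC (x != v)).
Qed.

Lemma bin2_dbl d : 2 * 'C(d, 2) = d * d.-1.
Proof.
elim: d => [//|d IH]; rewrite binS bin1; case: d IH => [//|d] IH /=; lia.
Qed.

Lemma upper n : forall m (e : rel 'I_n) d l, simple_graph e -> num_edges e = m ->
  m = 'C(d,2) + l -> 1 <= d -> l <= d - 1 ->
  num_cliques e <= 2^d + 2^l + n - d - 1.
Proof.
elim/ltn_ind => m IH e d l sg hm hmd d1 ld.
case: (ltnP 0 m) => [mpos|m0]; last first.
  have l0 : l = 0 by lia.
  have dd : d = 1.
    case: d d1 ld hmd {IH} => [//|[//|d]] _ _ hmd.
    by move: (bin_gt0 d.+2 2) => /=; lia.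
  have e0 : num_edges e = 0 by lia.
  subst; have := cliques_noedge e0; rewrite /=; lia.
have [x0 hx0] : exists x0, 0 < #|nbr e x0|.
  apply/existsP; apply: contraLR mpos; rewrite negb_exists => /forallP H.
  have : \sum_(x : 'I_n) #|nbr e x| = 0.
    by apply: big1 => x _; move: (H x); rewrite -leqNgt leqn0 => /eqP.
  rewrite handshake // hm; lia.
case: (@arg_minnP _ x0 (fun x => 0 < #|nbr e x|) (fun x => #|nbr e x|) hx0) => v hv vmin.
set k := #|nbr e v|.
have hX : k.+1 * k <= 2 * m.
  rewrite -hm -handshake //.
  have cX : #|v |: nbr e v| = k.+1.
    by rewrite cardsU1 (notin_nbr sg (subxx _)).
  apply: (@leq_trans (\sum_(x in v |: nbr e v) #|nbr e x|)).
    rewrite -cX -sum_nat_const; apply: leq_sum => x; rewrite in_setU1.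
    case/orP => [/eqP -> //|xv]; apply: vmin.
    apply/card_gt0P; exists v; rewrite inE; case: sg => _ sym; rewrite sym.
    by move: xv; rewrite inE.
  rewrite big_mkcond /=; apply: leq_sum => x _; by case: ifP.
have kd : k <= d - 1.
  have hb := bin2_dbl d; rewrite leqNgt; apply/negP => kd.
  have : d.+1 * d <= k.+1 * k by apply: leq_mul; lia.
  nia.
have [d' [l' [e1 [e2 [e3 e4]]]]] := arith n d1 ld hv kd.
have hlt : m - k < m by lia.
have IH' := IH (m - k) hlt (iso e v) d' l' (simple_iso v sg).
have ei := edges_iso v sg; rewrite -/k hm in ei.
have := IH' ltac:(lia) ltac:(lia) e2 e3.
have ci := cliques_iso v sg.
have : #|[set B : {set 'I_n} | (B \subset nbr e v) && is_clique e B]| <= 2 ^ k.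
  rewrite -card_powerset; apply: subset_leq_card; apply/subsetP => B.
  by rewrite !inE => /andP[].
move: e1 e4; rewrite -/k => e1 e4; lia.
Qed.

Definition gr n (t s : nat) : rel 'I_n := fun x y =>
  (x != y) && ((x < t) && (y < t) || (x == t :> nat) && (y < s) || (y == t :> nat) && (x < s)).

Lemma gr_simple n t s : simple_graph (@gr n t s).
Proof.
split; first by move=> x; rewrite /gr eqxx.
move=> x y; rewrite /gr eq_sym; case: (y != x) => //=.
by case: (x < t); case: (y < t); case: (x == t :> nat); case: (y == t :> nat);
   case: (x < s); case: (y < s).
Qed.

Lemma ordE n (x y : 'I_n) : (x == y) = (nat_of_ord x == nat_of_ord y).
Proof. by []. Qed.

Lemma iso_gr n t s (vt : 'I_n) : s <= t -> nat_of_ord vt = t -> iso (gr t s) vt = gr t 0.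
Proof.
move=> st hv; apply: functional_extensionality => x.
apply: functional_extensionality => y.
rewrite /iso /gr !ordE hv; apply/idP/idP; lia.
Qed.

Lemma nbr_gr n t s (vt : 'I_n) : s <= t -> nat_of_ord vt = t ->
  nbr (gr t s) vt = [set u : 'I_n | u < s].
Proof.
move=> st hv; apply/setP => u; rewrite !inE /gr ordE hv; apply/idP/idP; lia.
Qed.

Lemma card_lt n s : s <= n -> #|[set u : 'I_n | u < s]| = s.
Proof.
move=> sn.
have -> : [set u : 'I_n | u < s] = [set widen_ord sn i | i : 'I_s].
  apply/setP => u; rewrite inE; apply/idP/imsetP => [us|[i _ ->]] /=; last by [].
  by exists (Ordinal us) => //; apply/val_inj.
by rewrite card_imset ?card_ord // => i j /(congr1 val) /= h; apply/val_inj.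
Qed.

Lemma gr_succ n t : @gr n t.+1 0 = gr t t.
Proof.
apply: functional_extensionality => x; apply: functional_extensionality => y.
rewrite /gr ordE; apply/idP/idP; lia.
Qed.

Lemma empty_clique n (e : rel 'I_n) (A : {set 'I_n}) : (forall x y, e x y = false) ->
  is_clique e A = (#|A| <= 1).
Proof.
move=> h; apply/cliqueP/idP => [H | H x y xA yA xy].
  rewrite leqNgt; apply/negP => /card_gt1P[x [y [xA yA xy]]].
  by have := H x y xA yA xy; rewrite h.
exfalso; move: H; rewrite leqNgt => /negP; apply; apply/card_gt1P; by exists x, y.
Qed.

Lemma gr00 n : num_cliques (@gr n 0 0) = n.+1 /\ num_edges (@gr n 0 0) = 0.
Proof.
have h : forall x y : 'I_n, gr 0 0 x y = false by move=> x y; rewrite /gr; lia.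
split.
  rewrite /num_cliques -card_small; apply: eq_card => A.
  by rewrite !inE empty_clique.
rewrite /num_edges; apply/eqP; rewrite cards_eq0; apply/eqP; apply/setP => A.
rewrite !inE empty_clique //; case: (#|A|) => [|[|k]] //.
by rewrite andbF.
Qed.

Lemma gr_count n t : forall s, s <= t -> t < n ->
  num_cliques (@gr n t s) = 2^t + 2^s + n - t - 1 /\
  num_edges (@gr n t s) = 'C(t,2) + s.
Proof.
elim: t => [|t IH] s st tn.
- have -> : s = 0 by lia.
  have [c0 e0] := gr00 n; rewrite c0 e0; split => //=; lia.
- set vt := Ordinal tn.
  have hv : nat_of_ord vt = t.+1 by [].
  have ci := cliques_iso vt (@gr_simple n t.+1 s).
  have ei := edges_iso vt (@gr_simple n t.+1 s).
  rewrite iso_gr // nbr_gr // card_lt ?(ltnW tn) ?(leq_trans st (ltnW tn)) // in ei.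
  rewrite iso_gr // in ci.
  have E : [set B : {set 'I_n} | (B \subset nbr (gr t.+1 s) vt) && is_clique (gr t.+1 s) B]
      = powerset [set u : 'I_n | u < s].
    apply/setP => B; rewrite !inE nbr_gr //.
    case sB: (B \subset _) => //=; apply/cliqueP => x y xB yB xy.
    move: (subsetP sB x xB) (subsetP sB y yB); rewrite !inE /gr xy /=; lia.
  rewrite E card_powerset card_lt ?(leq_trans st (ltnW tn)) // in ci.
  rewrite gr_succ in ci ei.
  have [c1 e1] := IH t (leqnn t) (ltnW tn).
  rewrite c1 in ci; rewrite e1 in ei.
  have h1 := ltn_expl t (isT : 1 < 2).
  have h2 : 0 < 2 ^ s by rewrite expn_gt0.
  rewrite expnS binS bin1; split; lia.
Qed.

Theorem theorem2 (n m d l : nat) :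
  m <= 'C(n, 2) -> m = 'C(d, 2) + l -> 1 <= d -> l <= d - 1 ->
  (exists e : rel 'I_n, simple_graph e /\ num_edges e = m /\
     num_cliques e = 2 ^ d + 2 ^ l + n - d - 1) /\
  (forall e : rel 'I_n, simple_graph e -> num_edges e = m ->
     num_cliques e <= 2 ^ d + 2 ^ l + n - d - 1).
Proof.
move=> hmn hm d1 ld; split; last first.
  by move=> e sg he; exact: (@upper n m e d l sg he hm d1 ld).
case: (ltnP 0 m) => [mpos|m0]; last first.
  have l0 : l = 0 by lia.
  have dd : d = 1.
    case: d d1 ld hm => [//|[//|d]] _ _ hm.
    by move: (bin_gt0 d.+2 2) => /=; lia.
  have [c0 e0] := gr00 n.
  exists (gr 0 0); split; first exact: gr_simple.
  split; first by lia.
  by rewrite c0 l0 dd /=; lia.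
have d2 : 2 <= d.
  case: d d1 ld hm => [//|[|d]] // _ ld hm.
  by move: hm; rewrite bin_small //; lia.
have n0 : 0 < n.
  by move: hmn; case: (n) => [|n'] //; rewrite bin_small //; lia.
have dn : d <= n.
  rewrite leqNgt; apply/negP => nd.
  have := leq_bin2l 2 nd; rewrite binS bin1; lia.
case: (ltnP 0 l) => [lpos|l0].
  have dn' : d < n.
    rewrite ltnNge; apply/negP => nd.
    have := leq_bin2l 2 nd; lia.
  have [c e] := @gr_count n d l ltac:(lia) dn'.
  exists (gr d l); split; first exact: gr_simple.
  by split; [lia|].
case: d d1 ld hm d2 dn => [//|d'] _ ld hm d2 dn.
have [c e] := @gr_count n d' d' (leqnn _) dn.
exists (gr d' d'); split; first exact: gr_simple.
have h1 := ltn_expl d' (isT : 1 < 2).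
rewrite binS bin1 in hm.
split; first by lia.
have -> : l = 0 by lia.
rewrite c expnS expn0; lia.
Qed.
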